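(* For every $m\times n$ XOR non-local game $G$ there are non-negative constants $c_1,\dots,c_m$ such that for every $0\le\epsilon<1/(4(m+n))$ and every $\epsilon$-optimal vector strategy $\{u_i\},\{v_j\}$ for $G$, $$\Bigl\|\sum_jG_{ij}v_j-c_iu_i\Bigr\|\le\sqrt{10}\,(m+n)^{1/4}\epsilon^{1/4}\qquad(1\le i\le m).$$ In particular, for every optimal vector strategy $\sum_jG_{ij}v_j=c_iu_i$ and $\sum_jG_{ij}u_i\cdot v_j=c_i$. If $G$ has no zero rows then all $c_i$ are strictly positive.
   Context: An $m\times n$ XOR non-local game has real cost matrix $G=(G_{ij})$ with $\sum|G_{ij}|=1$. A vector strategy for $G$ is a pair of families of unit vectors $u_1,\dots,u_m$, $v_1,\dots,v_n$ in some $\mathbb{R}^N$, with bias $\sum_{i,j}G_{ij}u_i\cdot v_j$. The quantum success bias $\varepsilon_q(G)$ equals the maximum bias over all vector strategies; a vector strategy is $\epsilon$-optimal if its bias is at least $\varepsilon_q(G)-\epsilon$, and optimal if $\epsilon=0$. *)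

(* Defs.v *)
From Stdlib Require Import Reals Lra Lia ClassicalEpsilon.
Open Scope R_scope.

Fixpoint sumR (n : nat) (f : nat -> R) : R :=
  match n with
  | O => 0
  | S k => sumR k f + f k
  end.

(* A vector in R^N is a function nat -> R, only coordinates k < N matter. *)
Definition dot (N : nat) (x y : nat -> R) : R := sumR N (fun k => x k * y k).
Definition vnorm (N : nat) (x : nat -> R) : R := sqrt (dot N x x).

Definition xor_game (m n : nat) (G : nat -> nat -> R) : Prop :=
  sumR m (fun i => sumR n (fun j => Rabs (G i j))) = 1.

Definition vector_strategy (m n N : nat) (u v : nat -> nat -> R) : Prop :=
  (forall i, (i < m)%nat -> dot N (u i) (u i) = 1) /\
  (forall j, (j < n)%nat -> dot N (v j) (v j) = 1).

Definition bias (m n N : nat) (G : nat -> nat -> R) (u v : nat -> nat -> R) : R :=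
  sumR m (fun i => sumR n (fun j => G i j * dot N (u i) (v j))).

Definition bias_set (m n : nat) (G : nat -> nat -> R) (b : R) : Prop :=
  exists N u v, vector_strategy m n N u v /\ b = bias m n N G u v.

(* Quantum success bias: the supremum (in fact maximum) of the biases. *)
Definition eps_q (m n : nat) (G : nat -> nat -> R) : R :=
  epsilon (inhabits 0) (fun q => is_lub (bias_set m n G) q).

Definition eps_optimal (m n N : nat) (G : nat -> nat -> R) (eps : R)
  (u v : nat -> nat -> R) : Prop :=
  vector_strategy m n N u v /\ bias m n N G u v >= eps_q m n G - eps.

Definition optimal (m n N : nat) (G : nat -> nat -> R) (u v : nat -> nat -> R) : Prop :=
  eps_optimal m n N G 0 u v.

Definition row_comb (n : nat) (G : nat -> nat -> R) (i : nat) (v : nat -> nat -> R)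
  : nat -> R := fun k => sumR n (fun j => G i j * v j k).

(* Main.v *)
Require Import Defs.
From Stdlib Require Import Reals Lra Lia Psatz ClassicalEpsilon Classical.
Open Scope R_scope.

Lemma Rabs_inv a b : Rabs a <= b -> -b <= a <= b.
Proof. unfold Rabs; destruct (Rcase_abs a); intros; lra. Qed.

Lemma sumR_ext n f g : (forall k, (k < n)%nat -> f k = g k) -> sumR n f = sumR n g.
Proof. induction n; simpl; intros H; auto. rewrite IHn by (intros; apply H; lia). rewrite H by lia. reflexivity. Qed.

Lemma sumR_plus n f g : sumR n (fun k => f k + g k) = sumR n f + sumR n g.
Proof. induction n; simpl; [lra|]. rewrite IHn; lra. Qed.

Lemma sumR_scal n c f : sumR n (fun k => c * f k) = c * sumR n f.
Proof. induction n; simpl; [lra|]. rewrite IHn; lra. Qed.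

Lemma sumR_minus n f g : sumR n (fun k => f k - g k) = sumR n f - sumR n g.
Proof. induction n; simpl; [lra|]. rewrite IHn; lra. Qed.

Lemma sumR_zero n : sumR n (fun _ => 0) = 0.
Proof. induction n; simpl; [lra|]. rewrite IHn; lra. Qed.

Lemma sumR_swap n m f : sumR n (fun i => sumR m (fun j => f i j)) = sumR m (fun j => sumR n (fun i => f i j)).
Proof. induction n; simpl.
 - rewrite sumR_zero; reflexivity.
 - rewrite IHn, <- sumR_plus. reflexivity. Qed.

Lemma sumR_add a b f : sumR (a + b) f = sumR a f + sumR b (fun k => f (a + k)%nat).
Proof. induction b; simpl. - rewrite Nat.add_0_r; lra. - rewrite Nat.add_succ_r; simpl. rewrite IHb; lra. Qed.

Lemma sumR_le n f g : (forall k, (k<n)%nat -> f k <= g k) -> sumR n f <= sumR n g.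
Proof. induction n; simpl; intros H; [lra|]. assert (f n <= g n) by (apply H; lia).
 assert (sumR n f <= sumR n g) by (apply IHn; intros; apply H; lia). lra. Qed.

Lemma sumR_nonneg n f : (forall k, (k<n)%nat -> 0 <= f k) -> 0 <= sumR n f.
Proof. intros H. rewrite <- (sumR_zero n). apply sumR_le; auto. Qed.

Lemma sumR_ge_term n f i : (forall k, (k<n)%nat -> 0 <= f k) -> (i < n)%nat -> f i <= sumR n f.
Proof. induction n; simpl; intros H Hi; [lia|].
 assert (0 <= sumR n f) by (apply sumR_nonneg; intros; apply H; lia).
 destruct (Nat.eq_dec i n). - subst. lra.
 - assert (f i <= sumR n f) by (apply IHn; [intros; apply H; lia| lia]).
   assert (0 <= f n) by (apply H; lia). lra. Qed.

Lemma sumR_abs n f : Rabs (sumR n f) <= sumR n (fun k => Rabs (f k)).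
Proof. induction n; simpl. - rewrite Rabs_R0; lra.
 - eapply Rle_trans; [apply Rabs_triang|]. lra. Qed.

Lemma sumR_replace m f x i0 : (i0 < m)%nat ->
  sumR m (fun i => if Nat.eqb i i0 then x else f i) = sumR m f - f i0 + x.
Proof. induction m; simpl; intros H; [lia|].
 destruct (Nat.eq_dec i0 m).
 - subst. rewrite Nat.eqb_refl. rewrite (sumR_ext m _ f). lra.
   intros k Hk. destruct (Nat.eqb_spec k m); [lia|auto].
 - rewrite IHm by lia. destruct (Nat.eqb_spec m i0); [lia|]. lra.
Qed.

Lemma sumR_half n f g h : (forall k, (k<n)%nat -> h k = (f k + g k)/2) ->
  sumR n h = (sumR n f + sumR n g)/2.
Proof. intros H. rewrite (sumR_ext n h (fun k => /2 * f k + /2 * g k)).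
 rewrite sumR_plus, !sumR_scal. lra. intros; rewrite H by auto; lra. Qed.

Lemma wsum_bound n a d B : (forall l, (l<n)%nat -> Rabs (d l) <= B) ->
  Rabs (sumR n (fun l => a l * d l)) <= B * sumR n (fun l => Rabs (a l)).
Proof. intros H. eapply Rle_trans; [apply sumR_abs|]. rewrite <- sumR_scal.
 apply sumR_le; intros l Hl. rewrite Rabs_mult. specialize (H l Hl).
 pose proof (Rabs_pos (a l)). nra. Qed.

Lemma dot_ext N x y x' y' : (forall k, (k<N)%nat -> x k = x' k) -> (forall k, (k<N)%nat -> y k = y' k) ->
  dot N x y = dot N x' y'.
Proof. intros H1 H2. unfold dot. apply sumR_ext; intros. rewrite H1, H2 by auto. reflexivity. Qed.

Lemma dot_comm N x y : dot N x y = dot N y x.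
Proof. unfold dot; apply sumR_ext; intros; ring. Qed.

Lemma dot_nonneg N x : 0 <= dot N x x.
Proof. unfold dot; apply sumR_nonneg; intros; nra. Qed.

Lemma dot_row N n G i x v :
  dot N x (row_comb n G i v) = sumR n (fun j => G i j * dot N x (v j)).
Proof. unfold dot, row_comb.
 transitivity (sumR N (fun k => sumR n (fun j => G i j * (x k * v j k)))).
 - apply sumR_ext; intros k _. rewrite <- (sumR_scal n (x k)). apply sumR_ext; intros; simpl; ring.
 - rewrite sumR_swap. apply sumR_ext; intros. rewrite sumR_scal. reflexivity.
Qed.

Lemma dot_scal_l N x y t : dot N (fun k => x k * t) y = t * dot N x y.
Proof. unfold dot. rewrite <- sumR_scal. apply sumR_ext; intros; ring. Qed.

Lemma dot_scal_r N x y t : dot N x (fun k => y k * t) = t * dot N x y.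
Proof. unfold dot. rewrite <- sumR_scal. apply sumR_ext; intros; ring. Qed.

Lemma dot_zero_l N y : dot N (fun _ => 0) y = 0.
Proof. unfold dot. transitivity (sumR N (fun _ => 0)); [apply sumR_ext; intros; ring| apply sumR_zero]. Qed.

Lemma dot_one a b : dot 1 (fun _ => a) (fun _ => b) = a * b.
Proof. unfold dot; simpl; ring. Qed.

Definition cat (N1 : nat) (x y : nat -> R) : nat -> R :=
  fun k => if Nat.ltb k N1 then x k else y (k - N1)%nat.

Lemma dot_cat N1 N2 x1 x2 y1 y2 :
  dot (N1 + N2) (cat N1 x1 x2) (cat N1 y1 y2) = dot N1 x1 y1 + dot N2 x2 y2.
Proof. unfold dot. rewrite sumR_add. f_equal.
 - apply sumR_ext; intros k Hk. unfold cat. destruct (Nat.ltb_spec k N1); [reflexivity|lia].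
 - apply sumR_ext; intros k Hk. unfold cat. destruct (Nat.ltb_spec (N1+k) N1); [lia|].
   replace (N1 + k - N1)%nat with k by lia. reflexivity.
Qed.

Lemma dot_expand N x y t :
  dot N (fun k => x k - t * y k) (fun k => x k - t * y k) = dot N x x - 2*t*dot N y x + t*t*dot N y y.
Proof. unfold dot.
 transitivity (sumR N (fun k => x k * x k + ((-2*t) * (y k * x k) + (t*t) * (y k * y k)))).
 - apply sumR_ext; intros; ring.
 - rewrite !sumR_plus, !sumR_scal. ring. Qed.

Lemma dot_zero_coord N x : dot N x x = 0 -> forall k, (k<N)%nat -> x k = 0.
Proof. intros H k Hk. assert (x k * x k <= dot N x x).
 { unfold dot. apply (sumR_ge_term N (fun k => x k * x k)); auto. intros; nra. }
 nra. Qed.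

Lemma unit_dot_bound N u v : dot N u u = 1 -> dot N v v = 1 -> Rabs (dot N u v) <= 1.
Proof. intros Hu Hv.
 pose proof (dot_nonneg N (fun k => u k - 1 * v k)) as H1.
 pose proof (dot_nonneg N (fun k => u k - (-1) * v k)) as H2.
 rewrite (dot_expand N u v 1) in H1. rewrite (dot_expand N u v (-1)) in H2. rewrite (dot_comm N v u) in H1, H2.
 apply Rabs_le; lra. Qed.

Lemma cs_unit N u w : dot N u u = 1 -> dot N u w <= sqrt (dot N w w).
Proof. intros Hu. set (Q := dot N u w).
 pose proof (dot_nonneg N (fun k => w k - Q * u k)) as H.
 rewrite (dot_expand N w u Q), Hu in H. fold Q in H. clearbody Q.
 pose proof (sqrt_pos (dot N w w)). pose proof (sqrt_sqrt (dot N w w) (dot_nonneg N w)).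
 destruct (Rle_dec Q (sqrt (dot N w w))) as [|n]; auto. apply Rnot_le_lt in n. nra. Qed.
Definition P_ N n G i (v : nat -> nat -> R) := dot N (row_comb n G i v) (row_comb n G i v).
Definition Q_ N n G i (u v : nat -> nat -> R) := dot N (u i) (row_comb n G i v).
Definition rowsum n (G : nat -> nat -> R) i := sumR n (fun j => Rabs (G i j)).

Lemma bias_Q m n N G u v : bias m n N G u v = sumR m (fun i => Q_ N n G i u v).
Proof. unfold bias, Q_. apply sumR_ext; intros. rewrite dot_row. reflexivity. Qed.

Lemma P_formula N n G i v :
  P_ N n G i v = sumR n (fun j => G i j * sumR n (fun l => G i l * dot N (v j) (v l))).
Proof. unfold P_. rewrite dot_row. apply sumR_ext; intros j _.
 rewrite dot_comm, dot_row. reflexivity. Qed.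

Lemma rowsum_nonneg n G i : 0 <= rowsum n G i.
Proof. apply sumR_nonneg; intros; apply Rabs_pos. Qed.

Lemma rowsum_le1 m n G i : xor_game m n G -> (i < m)%nat -> rowsum n G i <= 1.
Proof. intros H Hi. unfold xor_game in H. rewrite <- H.
 apply (sumR_ge_term m (fun i => sumR n (fun j => Rabs (G i j)))); auto.
 intros; apply rowsum_nonneg. Qed.

Lemma P_bound m n N G u v i : vector_strategy m n N u v ->
  P_ N n G i v <= rowsum n G i * rowsum n G i.
Proof. intros [_ Hv]. rewrite P_formula.
 eapply Rle_trans; [apply Rle_abs|]. apply wsum_bound. intros l Hl.
 rewrite <- (Rmult_1_l (rowsum n G i)). apply wsum_bound. intros.
 apply unit_dot_bound; auto. Qed.

Lemma Q_bound m n N G u v i : vector_strategy m n N u v -> (i < m)%nat ->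
  Rabs (Q_ N n G i u v) <= rowsum n G i.
Proof. intros [Hu Hv] Hi. unfold Q_. rewrite dot_row.
 rewrite <- (Rmult_1_l (rowsum n G i)). apply wsum_bound. intros.
 apply unit_dot_bound; auto. Qed.

Lemma bias_bound m n N G u v : xor_game m n G -> vector_strategy m n N u v ->
  Rabs (bias m n N G u v) <= 1.
Proof. intros HG Hs. rewrite bias_Q. eapply Rle_trans; [apply sumR_abs|].
 unfold xor_game in HG. rewrite <- HG. apply sumR_le. intros i Hi.
 apply (Q_bound m n N G u v i Hs Hi). Qed.

Lemma trivial_strategy m n : vector_strategy m n 1 (fun _ _ => 1) (fun _ _ => 1).
Proof. split; intros; unfold dot; simpl; lra. Qed.

Lemma eps_q_lub m n G : xor_game m n G -> is_lub (bias_set m n G) (eps_q m n G).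
Proof. intros HG. unfold eps_q. apply epsilon_spec.
 destruct (completeness (bias_set m n G)) as [q Hq].
 - exists 1. intros b [N [u [v [Hs ->]]]]. pose proof (bias_bound m n N G u v HG Hs).
   apply Rabs_inv in H; lra.
 - exists (bias m n 1 G (fun _ _ => 1) (fun _ _ => 1)). exists 1%nat, (fun _ _ => 1), (fun _ _ => 1).
   split; auto. apply trivial_strategy.
 - exists q; exact Hq.
Qed.

Lemma eps_q_ub m n N G u v : xor_game m n G -> vector_strategy m n N u v ->
  bias m n N G u v <= eps_q m n G.
Proof. intros HG Hs. apply (proj1 (eps_q_lub m n G HG)). exists N, u, v; split; auto. Qed.

Lemma eps_q_approx m n G eps : xor_game m n G -> 0 < eps ->
  exists N u v, eps_optimal m n N G eps u v.
Proof. intros HG He. apply NNPP. intros Hno.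
 assert (Hub : is_upper_bound (bias_set m n G) (eps_q m n G - eps)).
 { intros b [N [u [v [Hs ->]]]]. destruct (Rle_dec (bias m n N G u v) (eps_q m n G - eps)); auto.
   exfalso. apply Hno. exists N, u, v. split; auto. lra. }
 pose proof (proj2 (eps_q_lub m n G HG) _ Hub). lra. Qed.

Lemma sum_sqrtP_le m n N G u v : xor_game m n G -> vector_strategy m n N u v ->
  sumR m (fun i => sqrt (P_ N n G i v)) <= eps_q m n G.
Proof. intros HG [Hu Hv].
 set (uh := fun i => cat N (fun k => row_comb n G i v k * / sqrt (P_ N n G i v))
                (fun _ => if Rlt_dec 0 (P_ N n G i v) then 0 else 1)).
 set (vh := fun j => cat N (v j) (fun _ => 0)).
 assert (Hs : vector_strategy m n (N+1) uh vh).
 { split.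
   - intros i Hi. unfold uh. rewrite dot_cat, dot_one, dot_scal_l, dot_scal_r.
     fold (P_ N n G i v). pose proof (dot_nonneg N (row_comb n G i v)). fold (P_ N n G i v) in H.
     destruct (Rlt_dec 0 (P_ N n G i v)).
     + pose proof (sqrt_sqrt _ H). pose proof (sqrt_lt_R0 _ r).
       set (s := sqrt (P_ N n G i v)) in *. rewrite <- H0. field. lra.
     + assert (P_ N n G i v = 0) by lra. rewrite H0. ring.
   - intros j Hj. unfold vh. rewrite dot_cat, dot_one, Hv by auto. ring. }
 eapply Rle_trans; [|apply (eps_q_ub m n (N+1) G uh vh HG Hs)].
 right. unfold bias. apply sumR_ext. intros i Hi.
 transitivity (/ sqrt (P_ N n G i v) * sumR n (fun j => G i j * dot N (row_comb n G i v) (v j))).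
 2:{ rewrite <- sumR_scal. apply sumR_ext; intros j Hj. unfold uh, vh.
     rewrite dot_cat, dot_one, dot_scal_l. ring. }
 rewrite <- dot_row. fold (P_ N n G i v).
 pose proof (dot_nonneg N (row_comb n G i v)). fold (P_ N n G i v) in H.
 destruct (Rlt_dec 0 (P_ N n G i v)).
 - pose proof (sqrt_sqrt _ H). pose proof (sqrt_lt_R0 _ r).
   set (s := sqrt (P_ N n G i v)) in *. rewrite <- H0. field. lra.
 - assert (P_ N n G i v = 0) by lra. rewrite H0, sqrt_0. ring.
Qed.

Lemma deficit m n N G eps u v i : xor_game m n G -> eps_optimal m n N G eps u v -> (i < m)%nat ->
  Q_ N n G i u v <= sqrt (P_ N n G i v) /\ sqrt (P_ N n G i v) - Q_ N n G i u v <= eps.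
Proof. intros HG [Hs Hb] Hi.
 assert (Hnn : forall k, (k < m)%nat -> 0 <= sqrt (P_ N n G k v) - Q_ N n G k u v).
 { intros k Hk. unfold Q_, P_. pose proof (cs_unit N (u k) (row_comb n G k v) (proj1 Hs k Hk)). lra. }
 split. - pose proof (Hnn i Hi); lra.
 - pose proof (sum_sqrtP_le m n N G u v HG Hs). rewrite bias_Q in Hb.
   pose proof (sumR_ge_term m _ i Hnn Hi). simpl in H0.
   assert (sumR m (fun k => sqrt (P_ N n G k v) - Q_ N n G k u v) =
           sumR m (fun k => sqrt (P_ N n G k v)) - sumR m (fun k => Q_ N n G k u v)).
   { apply sumR_minus. }
   lra.
Qed.
Lemma alg1 a1 a2 mm Q1 Q2 e1 e2 : 0 <= a1 <= 1 -> 0 <= a2 <= 1 -> 0 <= mm <= 1 ->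
  mm * mm = (a1*a1 + a2*a2)/2 -> Q1 <= a1 -> Q2 <= a2 -> mm - (Q1+Q2)/2 <= (e1+e2)/2 ->
  (a1 - a2) * (a1 - a2) <= 4 * (e1 + e2).
Proof. intros. set (h := (a1+a2)/2).
 assert (Hd : (mm - h) * (mm + h) = (a1 - a2) * (a1 - a2) / 4) by (unfold h; nra).
 assert (Hge : h <= mm).
 { destruct (Rle_dec h mm) as [|n0]; auto. apply Rnot_le_lt in n0.
   assert (0 <= (a1 - a2) * (a1 - a2)) by apply Rle_0_sqr.
   assert (0 < (h - mm) * (h + mm)) by (apply Rmult_lt_0_compat; unfold h in *; lra). nra. }
 assert ((mm - h) * (mm + h) <= (mm - h) * 2) by (apply Rmult_le_compat_l; unfold h in *; lra).
 unfold h in *. lra. Qed.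

Definition mid (N1 : nat) (x y : nat -> R) : nat -> R :=
  cat N1 (fun k => x k * / sqrt 2) (fun k => y k * / sqrt 2).

Lemma mid_dot N1 N2 x1 y1 x2 y2 :
  dot (N1 + N2) (mid N1 x1 y1) (mid N1 x2 y2) = (dot N1 x1 x2 + dot N2 y1 y2) / 2.
Proof. unfold mid. rewrite dot_cat, !dot_scal_l, !dot_scal_r.
 assert (H : sqrt 2 * sqrt 2 = 2) by (apply sqrt_sqrt; lra).
 assert (H2 : 0 < sqrt 2) by (apply sqrt_lt_R0; lra).
 set (s := sqrt 2) in *. rewrite <- H. field. lra. Qed.

Lemma sqrtP_le1 m n N G u v i : xor_game m n G -> vector_strategy m n N u v -> (i < m)%nat ->
  0 <= sqrt (P_ N n G i v) <= 1.
Proof. intros HG Hs Hi. split; [apply sqrt_pos|].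
 pose proof (P_bound m n N G u v i Hs). pose proof (rowsum_le1 m n G i HG Hi).
 pose proof (rowsum_nonneg n G i). rewrite <- sqrt_1. apply sqrt_le_1_alt. nra. Qed.

Lemma pairwise m n G N1 N2 e1 e2 u1 v1 u2 v2 i : xor_game m n G ->
  0 <= e1 -> 0 <= e2 ->
  eps_optimal m n N1 G e1 u1 v1 -> eps_optimal m n N2 G e2 u2 v2 -> (i < m)%nat ->
  Rabs (sqrt (P_ N1 n G i v1) - sqrt (P_ N2 n G i v2)) <= 2 * (sqrt e1 + sqrt e2).
Proof. intros HG He1 He2 H1 H2 Hi.
 set (um := fun i => mid N1 (u1 i) (u2 i)). set (vm := fun j => mid N1 (v1 j) (v2 j)).
 destruct H1 as [Hs1 Hb1]. destruct H2 as [Hs2 Hb2].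
 assert (Hs : vector_strategy m n (N1+N2) um vm).
 { split; intros; unfold um, vm; rewrite mid_dot.
   - rewrite (proj1 Hs1), (proj1 Hs2) by auto; lra.
   - rewrite (proj2 Hs1), (proj2 Hs2) by auto; lra. }
 assert (Hbm : bias m n (N1+N2) G um vm = (bias m n N1 G u1 v1 + bias m n N2 G u2 v2)/2).
 { unfold bias. apply sumR_half. intros k _. apply sumR_half. intros j _.
   unfold um, vm. rewrite mid_dot. lra. }
 assert (Hopt : eps_optimal m n (N1+N2) G ((e1+e2)/2) um vm).
 { split; auto. lra. }
 assert (HQ : Q_ (N1+N2) n G i um vm = (Q_ N1 n G i u1 v1 + Q_ N2 n G i u2 v2)/2).
 { unfold Q_. rewrite !dot_row. apply sumR_half. intros j _. unfold um, vm. rewrite mid_dot. lra. }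
 assert (HP : P_ (N1+N2) n G i vm = (P_ N1 n G i v1 + P_ N2 n G i v2)/2).
 { rewrite !P_formula. apply sumR_half. intros j _.
   rewrite (sumR_half n (fun l => G i l * dot N1 (v1 j) (v1 l)) (fun l => G i l * dot N2 (v2 j) (v2 l))).
   lra. intros l _. unfold vm. rewrite mid_dot. lra. }
 destruct (deficit m n (N1+N2) G _ um vm i HG Hopt Hi) as [_ Dm].
 destruct (deficit m n N1 G _ u1 v1 i HG (conj Hs1 Hb1) Hi) as [D1 _].
 destruct (deficit m n N2 G _ u2 v2 i HG (conj Hs2 Hb2) Hi) as [D2 _].
 pose proof (sqrtP_le1 m n N1 G u1 v1 i HG Hs1 Hi).
 pose proof (sqrtP_le1 m n N2 G u2 v2 i HG Hs2 Hi).
 pose proof (sqrtP_le1 m n (N1+N2) G um vm i HG Hs Hi) as H3.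
 rewrite HQ in Dm. rewrite HP in Dm, H3.
 pose proof (dot_nonneg N1 (row_comb n G i v1)) as P1n. pose proof (dot_nonneg N2 (row_comb n G i v2)) as P2n.
 fold (P_ N1 n G i v1) in P1n. fold (P_ N2 n G i v2) in P2n.
 pose proof (sqrt_sqrt _ P1n) as S1. pose proof (sqrt_sqrt _ P2n) as S2.
 assert (Pm : 0 <= (P_ N1 n G i v1 + P_ N2 n G i v2)/2) by lra.
 pose proof (sqrt_sqrt _ Pm) as Sm.
 set (a1 := sqrt (P_ N1 n G i v1)) in *. set (a2 := sqrt (P_ N2 n G i v2)) in *.
 set (mm := sqrt ((P_ N1 n G i v1 + P_ N2 n G i v2) / 2)) in *.
 set (Q1 := Q_ N1 n G i u1 v1) in *. set (Q2 := Q_ N2 n G i u2 v2) in *.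
 clearbody a1 a2 mm Q1 Q2.
 assert (Hsq : (a1 - a2) * (a1 - a2) <= 4 * (e1 + e2)) by (apply (alg1 a1 a2 mm Q1 Q2); auto; lra).
 pose proof (sqrt_sqrt _ He1). pose proof (sqrt_sqrt _ He2).
 pose proof (sqrt_pos e1). pose proof (sqrt_pos e2).
 apply Rabs_le. split; nra.
Qed.
Lemma alg2 a B r t : 0 < a <= 1 -> -2 <= B <= 2 -> 0 <= r -> r * r = B * B + a * a ->
  r <= B + t -> a * a <= 6 * t.
Proof. intros. assert (r <= 3).
 { destruct (Rle_dec r 3) as [|n0]; auto. apply Rnot_le_lt in n0. nra. }
 assert (B <= r).
 { destruct (Rle_dec B r) as [|n0]; auto. apply Rnot_le_lt in n0. nra. }
 assert ((r - B) * (r + B) <= (r - B) * 6) by (apply Rmult_le_compat_l; lra).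
 nra. Qed.

Definition Fset m n G i eps x := exists N u v, eps_optimal m n N G eps u v /\ x = sqrt (P_ N n G i v).
Definition Sset m n G i z := exists eps x, 0 <= eps /\ Fset m n G i eps x /\ z = x - 2 * sqrt eps.
Definition cdef m n G i := Rmax 0 (epsilon (inhabits 0) (fun q => is_lub (Sset m n G i) q)).

Lemma c_close m n G i N eps u v : xor_game m n G -> (i < m)%nat -> 0 <= eps ->
  eps_optimal m n N G eps u v ->
  Rabs (sqrt (P_ N n G i v) - cdef m n G i) <= 2 * sqrt eps.
Proof. intros HG Hi He Ho.
 set (y := sqrt (P_ N n G i v)).
 assert (Hub : is_upper_bound (Sset m n G i) (y + 2 * sqrt eps)).
 { intros z [e' [x [He' [[N' [u' [v' [Ho' ->]]]] ->]]]].
   pose proof (pairwise m n G N' N e' eps u' v' u v i HG He' He Ho' Ho Hi) as Hp.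
   apply Rabs_inv in Hp. fold y in Hp. lra. }
 assert (Hmem : Sset m n G i (y - 2 * sqrt eps)).
 { exists eps, y. split; auto. split; auto. exists N, u, v. split; auto. }
 assert (Hl : is_lub (Sset m n G i) (epsilon (inhabits 0) (fun q => is_lub (Sset m n G i) q))).
 { apply epsilon_spec. destruct (completeness (Sset m n G i)) as [q Hq].
   - exists (y + 2 * sqrt eps). exact Hub.
   - exists (y - 2 * sqrt eps). exact Hmem.
   - exists q; exact Hq. }
 unfold cdef. set (c0 := epsilon (inhabits 0) (fun q => is_lub (Sset m n G i) q)) in *.
 pose proof (proj2 Hl _ Hub). pose proof (proj1 Hl _ Hmem).
 assert (0 <= y) by apply sqrt_pos.
 unfold Rmax; destruct (Rle_dec 0 c0); apply Rabs_le; lra.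
Qed.

Lemma c_nonneg m n G i : 0 <= cdef m n G i.
Proof. apply Rmax_l. Qed.

Lemma c_pos m n G i0 : xor_game m n G -> (i0 < m)%nat ->
  (exists j, (j < n)%nat /\ G i0 j <> 0) -> 0 < cdef m n G i0.
Proof. intros HG Hi0 [j0 [Hj0 Gj0]].
 set (a := rowsum n G i0).
 assert (Ha : 0 < a <= 1).
 { split; [|apply (rowsum_le1 m n G i0 HG Hi0)].
   assert (Rabs (G i0 j0) <= a) by (apply (sumR_ge_term n (fun j => Rabs (G i0 j))); auto; intros; apply Rabs_pos).
   pose proof (Rabs_pos_lt _ Gj0). lra. }
 set (eps := (a*a/36)*(a*a/36)).
 assert (Hep : 0 < eps) by (unfold eps; apply Rmult_lt_0_compat; nra).
 destruct (eps_q_approx m n G eps HG Hep) as [N [u [v Ho]]].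
 pose proof Ho as [[Hu Hv] Hb].
 set (B := bias m n N G u v) in *. set (Q0 := Q_ N n G i0 u v).
 set (Bp := B - Q0).
 assert (Hr2 : 0 < Bp * Bp + a * a) by nra.
 set (r := sqrt (Bp * Bp + a * a)).
 assert (Hr : 0 < r) by (apply sqrt_lt_R0; lra).
 assert (Hrr : r * r = Bp * Bp + a * a) by (apply sqrt_sqrt; lra).
 set (g := Bp / r). set (s := a / r).
 set (sg := fun j => if Rle_dec 0 (G i0 j) then 1 else -1).
 assert (Hsg : forall j, G i0 j * sg j = Rabs (G i0 j)).
 { intros j. unfold sg. destruct (Rle_dec 0 (G i0 j)).
   - rewrite Rabs_right; lra. - rewrite Rabs_left; lra. }
 assert (Hsg2 : forall j, sg j * sg j = 1).
 { intros j. unfold sg. destruct (Rle_dec 0 (G i0 j)); lra. }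
 set (uh := fun i => if Nat.eqb i i0 then cat N (fun _ => 0) (fun _ => 1) else cat N (u i) (fun _ => 0)).
 set (vh := fun j => cat N (fun k => v j k * g) (fun _ => s * sg j)).
 assert (Hs : vector_strategy m n (N+1) uh vh).
 { split.
   - intros i Hi. unfold uh. destruct (Nat.eqb i i0).
     + rewrite dot_cat, dot_zero_l, dot_one. ring.
     + rewrite dot_cat, dot_one, Hu by auto. ring.
   - intros j Hj. unfold vh. rewrite dot_cat, dot_scal_l, dot_scal_r, Hv, dot_one by auto.
     transitivity ((Bp*Bp + a*a * (sg j * sg j)) / (r * r)).
     + unfold g, s. field. lra.
     + rewrite Hsg2, Rmult_1_r, <- Hrr. field. lra. }
 assert (Hbias : bias m n (N+1) G uh vh = r).
 { unfold bias.
   rewrite (sumR_ext m _ (fun i => if Nat.eqb i i0 then s * a else g * Q_ N n G i u v)).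
   - rewrite sumR_replace by auto. rewrite sumR_scal, <- bias_Q. fold B. fold Q0.
     unfold g, s. transitivity ((Bp * Bp + a * a) / r); [unfold Bp; field; lra|].
     rewrite <- Hrr. field. lra.
   - intros i Hi. unfold uh. destruct (Nat.eqb_spec i i0).
     + subst i. unfold a, rowsum. rewrite <- sumR_scal. apply sumR_ext; intros j Hj.
       unfold vh. rewrite dot_cat, dot_zero_l, dot_one. rewrite <- Hsg. ring.
     + unfold Q_. rewrite dot_row, <- sumR_scal. apply sumR_ext; intros j Hj.
       unfold vh. rewrite dot_cat, dot_one, dot_scal_r. ring. }
 pose proof (eps_q_ub m n (N+1) G uh vh HG Hs) as Hub. rewrite Hbias in Hub.
 destruct (deficit m n N G eps u v i0 HG Ho Hi0) as [D1 _]. fold Q0 in D1.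
 pose proof (c_close m n G i0 N eps u v HG Hi0 (Rlt_le _ _ Hep) Ho) as Hc. apply Rabs_inv in Hc.
 assert (Hse : sqrt eps = a*a/36) by (unfold eps; apply sqrt_square; nra).
 rewrite Hse in Hc.
 pose proof (bias_bound m n N G u v HG (conj Hu Hv)) as HB. fold B in HB. apply Rabs_inv in HB.
 pose proof (Q_bound m n N G u v i0 (conj Hu Hv) Hi0) as HQ. fold Q0 a in HQ. apply Rabs_inv in HQ.
 pose proof (alg2 a Bp r (Q0 + eps) Ha ltac:(unfold Bp; lra) (Rlt_le _ _ Hr) Hrr ltac:(unfold Bp; lra)).
 unfold eps in H.
 set (c := cdef m n G i0) in *. set (y := sqrt (P_ N n G i0 v)) in *. clearbody c y Q0 a.
 clear - H Hc D1 Ha. assert (0 < a * a) by nra. assert (a * a <= 1) by nra.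
 assert (a * a / 36 * (a * a / 36) <= a * a / 1296) by nra. lra.
Qed.
Lemma alg3 a c Q s Mq : 0 <= s -> s * s <= 1/4 -> 0 <= c -> -(2*s) <= a - c <= 2*s -> a <= 1 ->
  Q <= a -> a - Q <= s * s -> 1 <= Mq -> a*a - 2*c*Q + c*c <= 10 * Mq * s.
Proof. intros. assert (s <= 1/2) by nra.
 assert (E : a*a - 2*c*Q + c*c = (a-c)*(a-c) + 2*c*(a-Q)) by ring. rewrite E.
 assert ((a-c)*(a-c) <= 4*(s*s)) by nra.
 assert (2*c*(a-Q) <= 2*(1+2*s)*(s*s)) by (apply Rmult_le_compat; nra).
 nra. Qed.

Lemma main_bound m n G N eps u v i : xor_game m n G -> (i < m)%nat -> 0 <= eps ->
  eps * (4 * INR (m + n)) <= 1 ->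
  eps_optimal m n N G eps u v ->
  dot N (fun k => row_comb n G i v k - cdef m n G i * u i k)
        (fun k => row_comb n G i v k - cdef m n G i * u i k)
   <= 10 * sqrt (INR (m + n)) * sqrt eps /\
  Q_ N n G i u v <= sqrt (P_ N n G i v) /\ sqrt (P_ N n G i v) - Q_ N n G i u v <= eps.
Proof. intros HG Hi He Hlt Ho.
 rewrite (dot_expand N (row_comb n G i v) (u i)). rewrite (proj1 (proj1 Ho) i Hi).
 change (dot N (u i) (row_comb n G i v)) with (Q_ N n G i u v).
 change (dot N (row_comb n G i v) (row_comb n G i v)) with (P_ N n G i v).
 destruct (deficit m n N G eps u v i HG Ho Hi) as [D1 D2].
 pose proof (c_close m n G i N eps u v HG Hi He Ho) as Hc. apply Rabs_inv in Hc.
 pose proof (sqrtP_le1 m n N G u v i HG (proj1 Ho) Hi) as Ha.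
 pose proof (dot_nonneg N (row_comb n G i v)) as Pn. fold (P_ N n G i v) in Pn.
 pose proof (sqrt_sqrt _ Pn) as SP. pose proof (sqrt_sqrt _ He) as SE. pose proof (sqrt_pos eps).
 pose proof (c_nonneg m n G i).
 assert (HM : 1 <= INR (m + n)) by (apply (le_INR 1); lia).
 assert (HsM : 1 <= sqrt (INR (m + n))) by (rewrite <- sqrt_1; apply sqrt_le_1_alt; lra).
 split; [|split; auto].
 rewrite Rmult_1_r. rewrite <- SP at 1.
 apply alg3; auto; try lra.
 rewrite SE. nra.
Qed.

Theorem theorem3p1 (m n : nat) (G : nat -> nat -> R) :
  xor_game m n G ->
  exists c : nat -> R,
    (forall i, (i < m)%nat -> 0 <= c i) /\
    (forall (eps : R), 0 <= eps -> eps < 1 / (4 * INR (m + n)) ->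
       forall (N : nat) (u v : nat -> nat -> R),
       eps_optimal m n N G eps u v ->
       forall i, (i < m)%nat ->
         vnorm N (fun k => row_comb n G i v k - c i * u i k)
           <= sqrt 10 * sqrt (sqrt (INR (m + n))) * sqrt (sqrt eps)) /\
    (forall (N : nat) (u v : nat -> nat -> R),
       optimal m n N G u v ->
       forall i, (i < m)%nat ->
         (forall k, (k < N)%nat -> row_comb n G i v k = c i * u i k) /\
         sumR n (fun j => G i j * dot N (u i) (v j)) = c i) /\
    ((forall i, (i < m)%nat -> exists j, (j < n)%nat /\ G i j <> 0) ->
       forall i, (i < m)%nat -> 0 < c i).
Proof.
 intros HG. exists (cdef m n G). split; [|split; [|split]].
 - intros; apply c_nonneg.
 - intros eps He Hlt N u v Ho i Hi.
   assert (HM : 1 <= INR (m + n)) by (apply (le_INR 1); lia).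
   assert (Hlt' : eps * (4 * INR (m + n)) <= 1).
   { apply Rmult_lt_compat_r with (r := 4 * INR (m + n)) in Hlt; [|lra].
     unfold Rdiv in Hlt. rewrite Rmult_1_l, Rinv_l in Hlt by lra. lra. }
   destruct (main_bound m n G N eps u v i HG Hi He Hlt' Ho) as [Hd _].
   unfold vnorm. eapply Rle_trans; [apply sqrt_le_1_alt; exact Hd|].
   pose proof (sqrt_pos (INR (m+n))). pose proof (sqrt_pos eps).
   rewrite !sqrt_mult_alt; try lra.
 - intros N u v Ho i Hi.
   assert (HM : 1 <= INR (m + n)) by (apply (le_INR 1); lia).
   assert (Hz : 0 * (4 * INR (m + n)) <= 1) by lra.
   destruct (main_bound m n G N 0 u v i HG Hi (Rle_refl 0) Hz Ho) as [Hd [D1 D2]].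
   rewrite sqrt_0, Rmult_0_r in Hd.
   pose proof (dot_nonneg N (fun k => row_comb n G i v k - cdef m n G i * u i k)).
   assert (Hd0 : dot N (fun k => row_comb n G i v k - cdef m n G i * u i k)
         (fun k => row_comb n G i v k - cdef m n G i * u i k) = 0) by lra.
   split.
   + intros k Hk. pose proof (dot_zero_coord N _ Hd0 k Hk). simpl in H0. lra.
   + pose proof (c_close m n G i N 0 u v HG Hi (Rle_refl 0) Ho) as Hc.
     rewrite sqrt_0, Rmult_0_r in Hc. apply Rabs_inv in Hc.
     rewrite <- dot_row. change (dot N (u i) (row_comb n G i v)) with (Q_ N n G i u v). lra.
 - intros Hnz i Hi. apply c_pos; auto.
Qed.
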